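(* The class of context-free languages is not closed under ${\rm bdir}$; for instance, for the context-free language $L=\{0^{2m}1^{4m}2^n3^n : m,n\ge1\}$, ${\rm bdir}(L)\cap(03)^+(13)^+(22)^+=\{(03)^{2m}(13)^{4m}(22)^{3m}:m\ge1\}$, so ${\rm bdir}(L)$ is not context-free.
   Context: For $w=a_1\cdots a_{2n}$ of even length, ${\rm bdir}(w)=a_1a_{2n}a_2a_{2n-1}\cdots a_na_{n+1}$; for $w=a_1\cdots a_{2n+1}$ of odd length, ${\rm bdir}(w)=a_1a_{2n+1}a_2a_{2n}\cdots a_na_{n+2}a_{n+1}$. ${\rm bdir}(L)=\{{\rm bdir}(w):w\in L\}$. *)

(* Defs.v *)
From mathcomp Require Import all_boot.
Set Implicit Arguments. Unset Strict Implicit. Unset Printing Implicit Defensive.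

Definition language (T : Type) := seq T -> Prop.

(* Position i of bdir w (0-indexed): for even i = 2j it is w_j, for odd
   i = 2j+1 it is w_(|w|-1-j).  This reproduces both the even and odd length
   cases of the paper's definition. *)
Definition bdir (T : Type) (w : seq T) : seq T :=
  match w with
  | [::] => [::]
  | x0 :: _ =>
      mkseq (fun i => if odd i then nth x0 w (size w - 1 - i./2)
                      else nth x0 w i./2) (size w)
  end.

Definition bdir_lang (T : Type) (L : language T) : language T :=
  fun w => exists v, L v /\ w = bdir v.

(* Nonterminals are natural numbers; a symbol is a terminal (inl) or a
   nonterminal (inr).  A grammar is a finite list of productions plus a
   start symbol. *)
Definition symbol (T : Type) := (T + nat)%type.

Record cfg (T : Type) := CFG {
  cfg_rules : seq (nat * seq (symbol T));
  cfg_start : nat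
}.

Inductive derives (T : eqType) (G : cfg T) : seq (symbol T) -> seq T -> Prop :=
  | der_nil : derives G [::] [::]
  | der_term a s w : derives G s w -> derives G (inl a :: s) (a :: w)
  | der_nonterm A rhs s u w :
      (A, rhs) \in cfg_rules G ->
      derives G rhs u -> derives G s w ->
      derives G (inr A :: s) (u ++ w).

Definition cfg_language (T : eqType) (G : cfg T) : language T :=
  fun w => derives G [:: inr (cfg_start G)] w.

Definition context_free (T : eqType) (L : language T) : Prop :=
  exists G : cfg T, forall w, L w <-> cfg_language G w.

Definition Lex : language nat :=
  fun w => exists m n, 1 <= m /\ 1 <= n /\
    w = nseq (2 * m) 0 ++ nseq (4 * m) 1 ++ nseq n 2 ++ nseq n 3.

Definition Rex : language nat :=
  fun w => exists a b c, 1 <= a /\ 1 <= b /\ 1 <= c /\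
    w = flatten (nseq a [:: 0; 3]) ++ flatten (nseq b [:: 1; 3])
        ++ flatten (nseq c [:: 2; 2]).

Definition Mex : language nat :=
  fun w => exists m, 1 <= m /\
    w = flatten (nseq (2 * m) [:: 0; 3]) ++ flatten (nseq (4 * m) [:: 1; 3])
        ++ flatten (nseq (3 * m) [:: 2; 2]).

(* Main.v *)
Require Import Defs.
From mathcomp Require Import all_boot.
From mathcomp Require Import zify.
Set Implicit Arguments. Unset Strict Implicit. Unset Printing Implicit Defensive.

Section Pump.
Variable T : eqType.
Variable G : cfg T.

Inductive dc : nat -> seq (symbol T) -> seq T -> Prop :=
| dc_nil : dc 0 [::] [::]
| dc_term c a s w : dc c s w -> dc c (inl a :: s) (a :: w)
| dc_nt c1 c2 A rhs s u w : (A, rhs) \in cfg_rules G -> dc c1 rhs u -> dc c2 s w ->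
    dc (c1 + c2).+1 (inr A :: s) (u ++ w).

Lemma dc_eq c c' s w w' : c = c' -> w = w' -> dc c s w -> dc c' s w'.
Proof. by move=> -> ->. Qed.

Lemma der_dc s w : derives G s w <-> exists c, dc c s w.
Proof.
split.
- elim=> [|a s' w' _ [c H]|A rhs s' u w' Hr _ [c1 H1] _ [c2 H2]].
  + by exists 0; constructor.
  + by exists c; constructor.
  + by exists (c1 + c2).+1; apply: dc_nt Hr H1 H2.
- case=> c; elim=> [|c' a s' w' _ IH|c1 c2 A rhs s' u w' Hr _ IH1 _ IH2].
  + constructor.
  + by constructor.
  + by apply: der_nonterm Hr IH1 IH2.
Qed.

Lemma dc_single c A w : dc c [:: inr A] w ->
  exists c1 rhs, (A, rhs) \in cfg_rules G /\ dc c1 rhs w /\ c = c1.+1.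
Proof.
move=> H; inversion H as [|?|c1 c2 A' rhs s u w' Hr H1 H2 E1 E2 E3]; subst.
inversion H2; subst.
exists c1, rhs; split=> //; rewrite cats0 addn0; by split.
Qed.

Lemma dc_single_intro c1 A rhs u : (A, rhs) \in cfg_rules G -> dc c1 rhs u ->
  dc c1.+1 [:: inr A] u.
Proof.
move=> Hr H; apply: (dc_eq (c := (c1 + 0).+1) (w := u ++ [::])).
- by rewrite addn0.
- by rewrite cats0.
by apply: dc_nt Hr H dc_nil.
Qed.

Definition Ctx s C u1 y1 d := forall t c, dc c [:: inr C] t -> dc (c + d) s (u1 ++ t ++ y1).

Lemma ctx_id A : Ctx [:: inr A] A [::] [::] 0.
Proof. move=> t c H; apply: dc_eq H; [by rewrite addn0| by rewrite cats0]. Qed.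

Lemma ctx_rule A rhs B u1 y1 d : (A, rhs) \in cfg_rules G -> Ctx rhs B u1 y1 d ->
  Ctx [:: inr A] B u1 y1 d.+1.
Proof. move=> Hr H t c Ht; rewrite addnS; apply: dc_single_intro Hr (H _ _ Ht). Qed.

Lemma ctx_comp s B C u1 y1 d u1' y1' d' : Ctx s B u1 y1 d -> Ctx [:: inr B] C u1' y1' d' ->
  Ctx s C (u1 ++ u1') (y1' ++ y1) (d' + d).
Proof.
move=> H1 H2 t c Ht; apply: dc_eq (H1 _ _ (H2 _ _ Ht)); first by rewrite addnA.
by rewrite !catA.
Qed.

Definition K := maxn 2 (\max_(r <- cfg_rules G) size r.2).
Definition NT := undup [seq r.1 | r <- cfg_rules G].
Definition k := size NT.

Lemma K_pos : 0 < K. Proof. by rewrite /K leq_max. Qed.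

Lemma rhs_K A rhs : (A, rhs) \in cfg_rules G -> size rhs <= K.
Proof.
move=> Hr; rewrite /K leq_max; apply/orP; right.
have := @leq_bigmax_seq _ (cfg_rules G) xpredT (fun r : nat * seq (symbol T) => size r.2) _ Hr isT.
by [].
Qed.

Lemma rule_NT A rhs : (A, rhs) \in cfg_rules G -> A \in NT.
Proof. move=> Hr; rewrite /NT mem_undup; apply/mapP; by exists (A, rhs). Qed.

Lemma split_big j c s w : dc c s w -> size s * K ^ j < size w ->
  exists B u1 wB y1 cb d, [/\ w = u1 ++ wB ++ y1, dc cb [:: inr B] wB,
    K ^ j < size wB, c = cb + d & Ctx s B u1 y1 d].
Proof.
have Kj : 0 < K ^ j by rewrite expn_gt0 K_pos.
elim=> [|c' a s' w' _ IH|c1 c2 A rhs s' u w' Hr H1 _ H2 IH2] /=.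
- by rewrite mul0n.
- move=> Hs; have /IH [B [u1 [wB [y1 [cb [d [E1 E2 E3 E4 E5]]]]]]] : size s' * K ^ j < size w' by nia.
  exists B, (a :: u1), wB, y1, cb, d; split=> //; first by rewrite E1.
  by move=> t c0 Ht; constructor; apply: E5.
- move=> Hs; case: (ltnP (K ^ j) (size u)) => Hu.
  + exists A, [::], u, w', c1.+1, c2; split=> //; first by apply: dc_single_intro Hr H1.
    * move=> t c0 /dc_single [c3 [rhs' [Hr' [H3 ->]]]].
      by rewrite addSn; apply: dc_nt Hr' H3 H2.
  + have /IH2 [B [u1 [wB [y1 [cb [d [E1 E2 E3 E4 E5]]]]]]] : size s' * K ^ j < size w'.
      by rewrite size_cat in Hs; nia.
    exists B, (u ++ u1), wB, y1, cb, (c1 + d).+1; split=> //.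
    * by rewrite E1 !catA.
    * by rewrite E4; lia.
    * move=> t c0 Ht; apply: (dc_eq (c := (c1 + (c0 + d)).+1) (w := u ++ (u1 ++ t ++ y1))).
      - lia.
      - by rewrite !catA.
      by apply: dc_nt Hr H1 (E5 _ _ Ht).
Qed.

Definition Pump A w c := exists C u1 v m x y1 d e c',
  [/\ w = u1 ++ v ++ m ++ x ++ y1, Ctx [:: inr A] C u1 y1 d, Ctx [:: inr C] C v x e,
      0 < e & dc c' [:: inr C] m /\ c = c' + e + d].

Definition R A w c (X : seq nat) :=
  (exists C u1 m y1 d c', [/\ C \in X, w = u1 ++ m ++ y1, Ctx [:: inr A] C u1 y1 d,
     dc c' [:: inr C] m & c = c' + d]) \/ Pump A w c.

Lemma desc j : forall A w c (X : seq nat), dc c [:: inr A] w -> uniq X -> {subset X <= NT} ->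
  k < size X + j + 1 -> K ^ j < size w -> R A w c X.
Proof.
elim: j => [|j IH] A w c X Hd HX HXs Hk Hw.
  case: (boolP (A \in X)) => HA.
    left; exists A, [::], w, [::], 0, c; split=> //; [by rewrite cats0 | exact: ctx_id | by rewrite addn0].
  have [c1 [rhs [Hr _]]] := dc_single Hd.
  have : size (A :: X) <= k.
    apply: uniq_leq_size; first by rewrite /= HA HX.
    move=> y; rewrite inE => /orP [/eqP ->|]; [exact: rule_NT Hr| exact: HXs].
  rewrite /= => H; exfalso; move: Hk; rewrite addn0 addn1 ltnS => Hk; by have := leq_trans H Hk; rewrite ltnn.
case: (boolP (A \in X)) => HA.
  left; exists A, [::], w, [::], 0, c; split=> //; [by rewrite cats0 | exact: ctx_id | by rewrite addn0].
have [c1 [rhs [Hr [H1 Ec]]]] := dc_single Hd.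
have Hs : size rhs * K ^ j < size w.
  apply: leq_ltn_trans Hw; rewrite expnS leq_mul2r; apply/orP; right; exact: rhs_K Hr.
have [B [u1 [wB [y1 [cb [d [E1 E2 E3 E4 E5]]]]]]] := split_big H1 Hs.
have HA' : A \in NT by apply: rule_NT Hr.
have Hc := ctx_rule Hr E5.
case: (IH B wB cb (A :: X) E2); rewrite ?[uniq _]/= ?HA ?HX //.
- by move=> y; rewrite inE => /orP [/eqP ->|]; [| exact: HXs].
- rewrite /=; lia.
- move=> [C [u1' [m [y1' [d' [c' [F1 F2 F3 F4 F5]]]]]]].
  have Hc2 := ctx_comp Hc F3.
  move: F1; rewrite inE => /orP [/eqP EC|CX].
  + subst C; right; exists A, [::], (u1 ++ u1'), m, (y1' ++ y1), [::], 0, (d' + d.+1), c'; split=> //.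
    * by rewrite E1 F2 !catA cats0.
    * exact: ctx_id.
    * lia.
    * split=> //; lia.
  + left; exists C, (u1 ++ u1'), m, (y1' ++ y1), (d' + d.+1), c'; split=> //.
    * by rewrite E1 F2 !catA.
    * lia.
- move=> [C [u1' [v [m [x [y1' [d' [e [c' [F1 F2 F3 F4 [F5 F6]]]]]]]]]]].
  right; exists C, (u1 ++ u1'), v, m, x, (y1' ++ y1), (d' + d.+1), e, c'; split=> //.
  + by rewrite E1 F1 !catA.
  + exact: ctx_comp Hc F2.
  + split=> //; lia.
Qed.

Lemma find c : forall A w, dc c [:: inr A] w -> K ^ k < size w ->
  exists Z u1 wz y1 d c', [/\ w = u1 ++ wz ++ y1, Ctx [:: inr A] Z u1 y1 d,
    dc c' [:: inr Z] wz, c = c' + d & K ^ k < size wz <= K ^ k.+1].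
Proof.
elim: c {-2}c (leqnn c) => [|n IH] c Hc A w Hd Hw.
  by have [c1 [rhs [_ [_ E]]]] := dc_single Hd; move: Hc; rewrite E.
case: (leqP (size w) (K ^ k.+1)) => Hw2.
  exists A, [::], w, [::], 0, c; split; rewrite ?cats0 ?addn0 //; first exact: ctx_id.
  by rewrite Hw Hw2.
have [c1 [rhs [Hr [H1 Ec]]]] := dc_single Hd.
have Hs : size rhs * K ^ k < size w.
  apply: leq_ltn_trans Hw2; rewrite expnS leq_mul2r; apply/orP; right; exact: rhs_K Hr.
have [B [u1 [wB [y1 [cb [d [E1 E2 E3 E4 E5]]]]]]] := split_big H1 Hs.
have [|Z [u1' [wz [y1' [d' [c' [F1 F2 F3 F4 F5]]]]]]] := IH cb _ B wB E2 E3.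
  move: Hc; rewrite Ec E4; lia.
exists Z, (u1 ++ u1'), wz, (y1' ++ y1), (d' + d.+1), c'; split=> //.
- by rewrite E1 F1 !catA.
- exact: ctx_comp (ctx_rule Hr E5) F2.
- rewrite Ec E4 F4; lia.
Qed.

Lemma pumping_dc S w : K ^ k.+1 < size w -> forall c, dc c [:: inr S] w ->
  exists u v m x y, [/\ w = u ++ v ++ m ++ x ++ y, 0 < size (v ++ x),
    size (v ++ m ++ x) <= K ^ k.+1 &
    derives G [:: inr S] (u ++ v ++ v ++ m ++ x ++ x ++ y)].
Proof.
move=> Hw c; elim: c {-2}c (leqnn c) => [|n IH] c Hc Hd.
  by have [c1 [rhs [_ [_ E]]]] := dc_single Hd; move: Hc; rewrite E.
have Hw' : K ^ k < size w.
  apply: leq_trans Hw; rewrite ltnS expnS leq_pmull //; exact: K_pos.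
have [Z [u1 [wz [y1 [d [c' [E1 E2 E3 E4 /andP [E5 E6]]]]]]]] := find Hd Hw'.
case: (@desc k Z wz c' [::] E3 isT) => //.
- rewrite /=; lia.
- by move=> [C [? [? [? [? [? [] ]]]]]].
move=> [C [u1' [v [m [x [y1' [d' [e [c'' [F1 F2 F3 F4 [F5 F6]]]]]]]]]]].
have Hctx := ctx_comp E2 F2.
have Ew : w = (u1 ++ u1') ++ v ++ m ++ x ++ (y1' ++ y1) by rewrite E1 F1 !catA.
case: (posnP (size (v ++ x))) => Hvx.
  move: Hvx; rewrite size_cat => Hvx.
  have Ev : v = [::] by apply: size0nil; lia.
  have Ex : x = [::] by apply: size0nil; lia.
  apply: (IH (c'' + (d' + d))).
    move: Hc; rewrite E4 F6; lia.
  apply: dc_eq (Hctx _ _ F5) => //.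
  by rewrite Ew Ev Ex.
exists (u1 ++ u1'), v, m, x, (y1' ++ y1); split=> //.
  apply: leq_trans E6; rewrite F1 !size_cat; lia.
apply/der_dc; eexists; apply: dc_eq (Hctx _ _ (F3 _ _ (F3 _ _ F5))) => //.
by rewrite !catA.
Qed.

Lemma pumping : exists p, forall w, cfg_language G w -> p < size w ->
  exists u v m x y, [/\ w = u ++ v ++ m ++ x ++ y, 0 < size (v ++ x),
    size (v ++ m ++ x) <= p & cfg_language G (u ++ v ++ v ++ m ++ x ++ x ++ y)].
Proof.
exists (K ^ k.+1) => w /der_dc [c Hd] Hw.
have [u [v [m [x [y [H1 H2 H3 H4]]]]]] := pumping_dc Hw Hd. by exists u, v, m, x, y.
Qed.
End Pump.

Definition step (q a : nat) : nat :=
 match q, a with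
 | 0, 0 => 1 | 0, 1 => 3 | 0, 2 => 5
 | 1, 3 => 0
 | 2, 1 => 3 | 2, 2 => 5
 | 3, 3 => 2
 | 4, 2 => 5
 | 5, 2 => 4
 | _, _ => 6 end.

Definition run q (w : seq nat) := foldl step q w.

Lemma step_lt q a : step q a < 7.
Proof. by case: q => [|[|[|[|[|[|q]]]]]]; case: a => [|[|[|[|a]]]]. Qed.

Lemma run_lt q w : q < 7 -> run q w < 7.
Proof. by elim: w q => [|a w IH] q Hq //=; apply: IH; apply: step_lt. Qed.

Definition enc p A q := 1 + (A * 7 + p) * 7 + q.

Lemma enc_inj p A q p' A' q' : p < 7 -> q < 7 -> p' < 7 -> q' < 7 ->
  enc p A q = enc p' A' q' -> [/\ p = p', A = A' & q = q'].
Proof. rewrite /enc => *; split; lia. Qed.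

Fixpoint expand (p : nat) (s : seq (symbol nat)) : seq (seq (symbol nat) * nat) :=
 match s with
 | [::] => [:: ([::], p)]
 | inl a :: s' => [seq (inl a :: r.1, r.2) | r <- expand (step p a) s']
 | inr B :: s' => [seq (inr (enc p B p') :: r.1, r.2) | p' <- iota 0 7, r <- expand p' s']
 end.

Definition expand_spec p s r q : Prop :=
  match s with
  | [::] => r = [::] /\ q = p
  | inl a :: s' => exists r', r = inl a :: r' /\ (r', q) \in expand (step p a) s'
  | inr B :: s' => exists p' r', [/\ p' < 7, r = inr (enc p B p') :: r' & (r', q) \in expand p' s']
  end.

Lemma expand_inr p B s' : expand p (inr B :: s') =
  [seq (inr (enc p B p') :: r.1, r.2) | p' <- iota 0 7, r <- expand p' s'].
Proof. by []. Qed.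

Lemma expand_inv p s r q : (r, q) \in expand p s -> expand_spec p s r q.
Proof.
case: s => [|[a|B] s'].
- by rewrite /= inE => /eqP [-> ->].
- case/mapP => [[r' q']] H [-> ->]; by exists r'.
- rewrite expand_inr => /allpairsPdep [p' [[r' q']] [Hp H [-> ->]]]; exists p', r'; split=> //.
  by rewrite mem_iota in Hp.
Qed.

Lemma expand_lt s : forall p r q, p < 7 -> (r, q) \in expand p s -> q < 7.
Proof.
elim: s => [|[a|B] s IH] p r q Hp /expand_inv /=.
- by case=> _ ->.
- by case=> r' [_ H]; apply: IH H; apply: step_lt.
- by case=> p' [r' [Hp' _ H]]; apply: IH H.
Qed.

Section Prod.
Variable G : cfg nat.

Definition prod_rules : seq (nat * seq (symbol nat)) :=
  [seq (0, [:: inr (enc 0 (cfg_start G) f)]) | f <- [:: 0; 2; 4]] ++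
  flatten [seq [seq (enc p rl.1 r.2, r.1) | p <- iota 0 7, r <- expand p rl.2] | rl <- cfg_rules G].

Definition G' := CFG prod_rules 0.

Lemma fwd s w : derives G s w -> forall p, p < 7 ->
  exists r, (r, run p w) \in expand p s /\ derives G' r w.
Proof.
elim=> [|a s' w' _ IH|A rhs s' u w' Hr _ IH1 _ IH2] p Hp.
- exists [::]; split; [by rewrite inE | constructor].
- have [r [H1 H2]] := IH (step p a) (step_lt _ _).
  exists (inl a :: r); split; last by constructor.
  by apply/mapP; exists (r, run (step p a) w').
- have [r1 [H1 H1']] := IH1 p Hp.
  have Hp' := run_lt u Hp.
  have [r2 [H2 H2']] := IH2 _ Hp'.
  exists (inr (enc p A (run p u)) :: r2); split.
  + rewrite /run foldl_cat -/(run p u) expand_inr; apply/allpairsPdep.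
    exists (run p u), (r2, run (run p u) w'); split=> //; by rewrite mem_iota.
  + apply: der_nonterm H1' H2' => /=.
    rewrite mem_cat; apply/orP; right; apply/flatten_mapP; exists (A, rhs) => //.
    apply/allpairsPdep; exists p, (r1, run p u); split=> //; by rewrite mem_iota.
Qed.

Lemma bwd r w : derives G' r w -> forall s p q, p < 7 -> (r, q) \in expand p s ->
  derives G s w /\ run p w = q.
Proof.
elim=> [|a r' w' _ IH|X rhs' r' u w' Hr _ IH1 _ IH2] s p q Hp /expand_inv.
- case: s => [|[a|B] s'] /=.
  + by move=> [_ ->]; split=> //; constructor.
  + by case=> ? [].
  + by case=> ? [? []].
- case: s => [|[b|B] s'] /=.
  + by case.
  + case=> r'' [[Ea Er] H]; subst.
    have [H1 H2] := IH _ _ _ (step_lt p b) H; split=> //; by constructor.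
  + by case=> ? [? []].
- case: s => [|[b|B] s'] /=.
  + by case.
  + by case=> ? [].
  case=> p' [r'' [Hp' [EX Er] H]]; subst X r''.
  move: Hr; rewrite /= mem_cat => /orP [/mapP [f Hf [E _]]|].
    by move: E; rewrite /enc; lia.
  case/flatten_mapP => [[A rhs]] HAr /allpairsPdep [p0 [[r0 q0]] [Hp0 Hr0 [E1 E2]]].
  subst rhs'; move: Hp0; rewrite mem_iota /= => Hp0.
  have Hq0 : q0 < 7.
    exact: expand_lt Hp0 Hr0.
  have E3 : p0 = p by lia.
  have E4 : A = B by lia.
  have E5 : q0 = p' by lia.
  subst p0 A q0.
  have [D1 R1] := IH1 _ _ _ Hp Hr0.
  have [D2 R2] := IH2 _ _ _ Hp' H.
  split; first by apply: der_nonterm HAr D1 D2.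
  by rewrite /run foldl_cat -/(run p u) R1.
Qed.

Lemma der_single A w : derives G' [:: inr A] w ->
  exists rhs, (A, rhs) \in prod_rules /\ derives G' rhs w.
Proof.
move=> H; inversion H as [|?|A' rhs s u w' Hr H1 H2 E1 E2]; subst.
inversion H2; subst; exists rhs; by rewrite cats0.
Qed.

Lemma prod_lang w : cfg_language G' w <-> cfg_language G w /\ run 0 w \in [:: 0; 2; 4].
Proof.
split.
- move=> /der_single [rhs [Hr Hd]].
  move: Hr; rewrite mem_cat => /orP [/mapP [f Hf [E]]|].
    subst rhs.
    have Hf7 : f < 7 by move: Hf; rewrite !inE => /or3P [] /eqP ->.
    have [] := bwd Hd (s := [:: inr (cfg_start G)]) (p := 0) (q := f) isT.
      rewrite expand_inr; apply/allpairsPdep; exists f, ([::], f); split=> //.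
      * by rewrite mem_iota.
      * by rewrite /= inE.
    by move=> D R; split=> //; rewrite R.
  case/flatten_mapP => [[A rhs']] _ /allpairsPdep [p0 [[r0 q0]] [_ _ [E _]]].
  by move: E; rewrite /enc; lia.
- move=> [Hd Hacc].
  have [r [Hr Hd']] := fwd Hd (p := 0) isT.
  move: Hr => /expand_inv [p' [r' [Hp' Er /expand_inv [Er' Eq]]]]; subst r r'.
  rewrite -[w]cats0; apply: der_nonterm; last exact: der_nil.
    rewrite /= mem_cat; apply/orP; left; apply/mapP; exists p' => //.
    by rewrite -Eq.
  by [].
Qed.
End Prod.

Section Gen.
Variable T : eqType.
Variable G : cfg T.

Lemma der_inl a s w : derives G (inl a :: s) w -> exists w', w = a :: w' /\ derives G s w'.
Proof. move=> H; inversion H; subst; by exists w0. Qed.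

Lemma der_inr A s w : derives G (inr A :: s) w ->
  exists rhs u w', [/\ w = u ++ w', (A, rhs) \in cfg_rules G, derives G rhs u & derives G s w'].
Proof. move=> H; inversion H; subst; by exists rhs, u, w0. Qed.

Lemma der_nil_inv w : derives G [::] w -> w = [::].
Proof. by move=> H; inversion H. Qed.

Lemma der_one A rhs u : (A, rhs) \in cfg_rules G -> derives G rhs u -> derives G [:: inr A] u.
Proof. by move=> Hr H; rewrite -[u]cats0; apply: der_nonterm Hr H (der_nil _). Qed.
Lemma der_cons_nt A s u w : derives G [:: inr A] u -> derives G s w -> derives G (inr A :: s) (u ++ w).
Proof.
move=> /der_inr [rhs [u' [w' [E Hr H1 H2]]]]; rewrite (der_nil_inv H2) cats0 in E; subst u.
exact: der_nonterm Hr H1.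
Qed.
End Gen.

Definition GL : cfg nat := CFG
  [:: (0, [:: inr 1; inr 2]);
      (1, [:: inl 0; inl 0; inr 1; inl 1; inl 1; inl 1; inl 1]);
      (1, [:: inl 0; inl 0; inl 1; inl 1; inl 1; inl 1]);
      (2, [:: inl 2; inr 2; inl 3]);
      (2, [:: inl 2; inl 3])] 0.

Definition wX m := nseq (2 * m) 0 ++ nseq (4 * m) 1.
Definition wY n := nseq n 2 ++ nseq n 3.

Lemma wX_S m : wX m.+1 = [:: 0; 0] ++ wX m ++ [:: 1; 1; 1; 1].
Proof.
by rewrite /wX !mulnS nseqD [4 + _]addnC nseqD /= -!catA.
Qed.

Lemma wY_S n : wY n.+1 = [:: 2] ++ wY n ++ [:: 3].
Proof.
have E : nseq n.+1 3 = nseq n 3 ++ [:: 3] by rewrite -addn1 nseqD.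
by rewrite /wY E /= catA.
Qed.
Lemma GL_rules A rhs : (A, rhs) \in cfg_rules GL ->
  (A = 0 /\ rhs = [:: inr 1; inr 2]) \/
  (A = 1 /\ rhs = [:: inl 0; inl 0; inr 1; inl 1; inl 1; inl 1; inl 1]) \/
  (A = 1 /\ rhs = [:: inl 0; inl 0; inl 1; inl 1; inl 1; inl 1]) \/
  (A = 2 /\ rhs = [:: inl 2; inr 2; inl 3]) \/
  (A = 2 /\ rhs = [:: inl 2; inl 3]).
Proof.
rewrite /= !inE => /orP [|/orP [|/orP [|/orP []]]] /eqP [-> ->]; tauto.
Qed.

Ltac peel := repeat match goal with
  | H : derives _ (inl _ :: _) _ |- _ => let w := fresh "w" in let E := fresh "E" in
        case/der_inl: H => w [E H]; subst
  | H : derives _ [::] _ |- _ => let E := fresh "E" in have E := der_nil_inv H; clear H; subst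
  end.

Lemma GL_X_fwd n : forall w, size w < n -> derives GL [:: inr 1] w -> exists m, 0 < m /\ w = wX m.
Proof.
elim: n => [//|n IH] w Hn /der_inr [rhs [u [w' [E Hr H1 H2]]]].
rewrite (der_nil_inv H2) cats0 in E; subst w.
have [[E1 E2]|[[_ E2]|[[_ E2]|[[E1 E2]|[E1 E2]]]]] := GL_rules Hr; try discriminate; subst rhs.
- peel. case/der_inr: H1 => [rhs' [a [b [E Hr' Ha Hb]]]]; subst. peel.
  have Hsa : size a < n by move: Hn; rewrite /= size_cat /=; lia.
  have [m [Hm ->]] := IH a Hsa (der_one Hr' Ha).
  by exists m.+1; rewrite wX_S.
- peel; by exists 1.
Qed.

Lemma GL_Y_fwd n : forall w, size w < n -> derives GL [:: inr 2] w -> exists m, 0 < m /\ w = wY m.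
Proof.
elim: n => [//|n IH] w Hn /der_inr [rhs [u [w' [E Hr H1 H2]]]].
rewrite (der_nil_inv H2) cats0 in E; subst w.
have [[E1 E2]|[[E1 E2]|[[E1 E2]|[[_ E2]|[_ E2]]]]] := GL_rules Hr; try discriminate; subst rhs.
- peel. case/der_inr: H1 => [rhs' [a [b [E Hr' Ha Hb]]]]; subst. peel.
  have Hsa : size a < n by move: Hn; rewrite /= size_cat /=; lia.
  have [m [Hm ->]] := IH a Hsa (der_one Hr' Ha).
  by exists m.+1; rewrite wY_S.
- peel; by exists 1.
Qed.

Lemma GL_X m : 0 < m -> derives GL [:: inr 1] (wX m).
Proof.
elim: m => [//|[|m] IH] _.
+ apply: der_one (_ : (1, [:: inl 0; inl 0; inl 1; inl 1; inl 1; inl 1]) \in _) _ => //.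
  by rewrite /wX /=; do 7 constructor.
+ apply: der_one (_ : (1, [:: inl 0; inl 0; inr 1; inl 1; inl 1; inl 1; inl 1]) \in _) _ => //.
  rewrite wX_S; apply: der_term; apply: der_term.
  apply: der_cons_nt; first exact: IH.
  by do 5 constructor.
Qed.

Lemma GL_Y m : 0 < m -> derives GL [:: inr 2] (wY m).
Proof.
elim: m => [//|[|m] IH] _.
+ apply: der_one (_ : (2, [:: inl 2; inl 3]) \in _) _ => //.
  by rewrite /wY /=; do 3 constructor.
+ apply: der_one (_ : (2, [:: inl 2; inr 2; inl 3]) \in _) _ => //.
  rewrite wY_S; apply: der_term.
  apply: der_cons_nt; first exact: IH.
  by do 2 constructor.
Qed.

Lemma Lex_CF : context_free Lex.
Proof.
exists GL => w; split.
- move=> [m [n [Hm [Hn ->]]]].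
  apply: der_one (_ : (0, [:: inr 1; inr 2]) \in _) _ => //.
  have -> : nseq (2*m) 0 ++ nseq (4*m) 1 ++ nseq n 2 ++ nseq n 3 = wX m ++ (wY n ++ [::]).
    by rewrite cats0 /wX /wY catA.
  exact: der_cons_nt (GL_X Hm) (der_cons_nt (GL_Y Hn) (der_nil _)).
- rewrite /cfg_language /= => /der_inr [rhs [u [w' [E Hr H1 H2]]]].
  rewrite (der_nil_inv H2) cats0 in E; subst w.
  have [[_ E2]|[[E1 E2]|[[E1 E2]|[[E1 E2]|[E1 E2]]]]] := GL_rules Hr; try discriminate; subst rhs.
  case/der_inr: H1 => [r1 [a [b [-> Hr1 Ha /der_inr [r2 [c [d [-> Hr2 Hc Hd]]]]]]]].
  rewrite (der_nil_inv Hd) cats0.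
  have [m [Hm ->]] := GL_X_fwd (ltnSn _) (der_one Hr1 Ha).
  have [n [Hn ->]] := GL_Y_fwd (ltnSn _) (der_one Hr2 Hc).
  exists m, n; split=> //; by rewrite /wX /wY !catA.
Qed.

Definition fl (a : nat) (s : seq nat) := flatten (nseq a s).

Lemma fl_S a s : fl a.+1 s = s ++ fl a s. Proof. by []. Qed.

Lemma count_fl (P : pred nat) a s : count P (fl a s) = a * count P s.
Proof. elim: a => [//|a IH]; by rewrite fl_S count_cat IH mulSn. Qed.

Lemma size_fl a s : size (fl a s) = a * size s.
Proof. elim: a => [//|a IH]; by rewrite fl_S size_cat IH mulSn. Qed.

Lemma mem_fl a s x : x \in fl a s -> x \in s.
Proof. elim: a => [//|a IH]; rewrite fl_S mem_cat => /orP [//|]; exact: IH. Qed.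

Lemma all_fl (P : pred nat) a s : all P s -> all P (fl a s).
Proof. move=> H; elim: a => [//|a IH]; by rewrite fl_S all_cat H IH. Qed.

Lemma nth_fl a x y i : i < 2 * a -> nth 0 (fl a [:: x; y]) i = if odd i then y else x.
Proof.
elim: a i => [//|a IH] [|[|i]] Hi //=.
rewrite IH ?negbK //; lia.
Qed.

Lemma halfP i : i = odd i + 2 * i./2.
Proof. by rewrite mul2n odd_double_half. Qed.

Definition gidx n i := if odd i then n - 1 - i./2 else i./2.

Lemma gidx_lt n i : i < n -> gidx n i < n.
Proof. rewrite /gidx => Hi; have := halfP i; case: (odd i) => /= E; lia. Qed.

Lemma gidx_inj n : {in iota 0 n &, injective (gidx n)}.
Proof.
move=> i j; rewrite !mem_iota /gidx /= !add0n => Hi Hj.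
have := halfP i; have := halfP j.
case: (odd i); case: (odd j) => /= E1 E2; lia.
Qed.

Lemma bdirE (y : nat) s :
  bdir (y :: s) = map (nth y (y :: s)) (map (gidx (size (y :: s))) (iota 0 (size (y :: s)))).
Proof.
rewrite /bdir /mkseq -map_comp.
apply: eq_map => i /=; rewrite /gidx; by case: (odd i).
Qed.

Lemma perm_bdir (s : seq nat) : perm_eq (bdir s) s.
Proof.
case: s => [//|y s'].
set s := y :: s'.
rewrite /s bdirE -/s.
have Es : map (nth y s) (iota 0 (size s)) = s by rewrite -[LHS]/(mkseq _ _) mkseq_nth.
rewrite -[X in perm_eq _ X]Es; apply: perm_map.
have Hu : uniq (map (gidx (size s)) (iota 0 (size s))).
  by rewrite map_inj_in_uniq ?iota_uniq //; exact: gidx_inj.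
apply: uniq_perm => //; first exact: iota_uniq.
have Hsub : {subset map (gidx (size s)) (iota 0 (size s)) <= iota 0 (size s)}.
  move=> z /mapP [i]; rewrite !mem_iota /= !add0n => Hi ->; exact: gidx_lt.
have Hsz : size (iota 0 (size s)) <= size (map (gidx (size s)) (iota 0 (size s))).
  by rewrite size_map.
by have [_ H] := uniq_min_size Hu Hsub Hsz.
Qed.

Definition lexw m n := nseq (2*m) 0 ++ nseq (4*m) 1 ++ nseq n 2 ++ nseq n 3.
Definition mexw m := fl (2*m) [:: 0; 3] ++ fl (4*m) [:: 1; 3] ++ fl (3*m) [:: 2; 2].

Lemma size_lexw m n : size (lexw m n) = 6 * m + 2 * n.
Proof. rewrite /lexw !size_cat !size_nseq; lia. Qed.

Lemma size_mexw m : size (mexw m) = 18 * m.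
Proof. rewrite /mexw !size_cat !size_fl /=; lia. Qed.

Lemma nth_lex m j : nth 0 (lexw m (6 * m)) j =
  if j < 2 * m then 0 else if j < 6 * m then 1 else if j < 12 * m then 2 else
  if j < 18 * m then 3 else 0.
Proof.
rewrite /lexw !nth_cat !size_nseq !nth_nseq.
repeat case: ltnP => ?; try lia.
Qed.

Lemma nth_mex m i : nth 0 (mexw m) i =
  if i < 4 * m then (if odd i then 3 else 0) else
  if i < 12 * m then (if odd i then 3 else 1) else
  if i < 18 * m then 2 else 0.
Proof.
rewrite /mexw !nth_cat !size_fl /=.
have [H1|H1] := ltnP i (4*m).
  rewrite ifT; last by lia.
  by rewrite nth_fl; last by lia.
rewrite ifF; last by lia.
have [H2|H2] := ltnP i (12*m).
  rewrite ifT; last by lia.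
  rewrite nth_fl; last by lia.
  have Ho : odd (2 * m * 2) = false by rewrite ssrnat.oddM andbF.
  have Hle : 2 * m * 2 <= i by lia.
  by rewrite (oddB Hle) Ho addbF.
rewrite ifF; last by lia.
have [H3|H3] := ltnP i (18*m).

  rewrite nth_fl; last by lia.
  by case: odd.

by rewrite nth_default // size_fl /=; lia.
Qed.

Lemma bdir_lex m : 0 < m -> bdir (lexw m (6 * m)) = mexw m.
Proof.
move=> Hm.
have [s Ev] : exists s, lexw m (6 * m) = 0 :: s.
  rewrite /lexw; case E: (2 * m) => [|k]; first lia.
  by eexists.
have Hsz : size (lexw m (6 * m)) = 18 * m by rewrite size_lexw; lia.
rewrite Ev bdirE -Ev Hsz.
apply: (@eq_from_nth _ 0); first by rewrite !size_map size_iota size_mexw.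
rewrite !size_map size_iota => i Hi.
rewrite (nth_map 0); last by rewrite size_map size_iota.
rewrite (nth_map 0); last by rewrite size_iota.
rewrite nth_iota // add0n nth_lex nth_mex /gidx.
have := halfP i; case: (odd i) => /= E.
- repeat case: ltnP => ?; try lia.
- repeat case: ltnP => ?; try lia.
Qed.

Lemma cnt_lex m n :
  [/\ count_mem 0 (lexw m n) = 2 * m, count_mem 1 (lexw m n) = 4 * m,
      count_mem 2 (lexw m n) = n & count_mem 3 (lexw m n) = n].
Proof. rewrite /lexw !count_cat !count_nseq /=; split; lia. Qed.

Definition rexw a b c := fl a [:: 0; 3] ++ fl b [:: 1; 3] ++ fl c [:: 2; 2].

Lemma cnt_rex a b c :
  [/\ count_mem 0 (rexw a b c) = a, count_mem 1 (rexw a b c) = b,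
      count_mem 2 (rexw a b c) = 2 * c & count_mem 3 (rexw a b c) = a + b].
Proof. rewrite /rexw !count_cat !count_fl /=; split; lia. Qed.

Lemma cnt_bdir k (v : seq nat) : count_mem k (bdir v) = count_mem k v.
Proof. by have /permP := perm_bdir v; apply. Qed.

Lemma part2 w : (bdir_lang Lex w /\ Rex w) <-> Mex w.
Proof.
split.
- move=> [[v [[m [n [Hm [Hn Ev]]]] Ew]] [a [b [c [Ha [Hb [Hc Er]]]]]]].
  have C k : count_mem k (rexw a b c) = count_mem k (lexw m n).
    by rewrite -[rexw a b c]Er Ew cnt_bdir Ev.
  have [A0 A1 A2 A3] := cnt_lex m n.
  have [B0 B1 B2 B3] := cnt_rex a b c.
  have := C 0; have := C 1; have := C 2; have := C 3.
  rewrite A0 A1 A2 A3 B0 B1 B2 B3 => E3 E2 E1 E0.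
  exists m; split=> //; rewrite Er.
  have -> : a = 2 * m by lia.
  have -> : b = 4 * m by lia.
  have -> : c = 3 * m by lia.
  by [].
- move=> [m [Hm ->]]; split.
  + exists (lexw m (6 * m)); split; last by rewrite bdir_lex.
    exists m, (6 * m); split=> //; split=> //; lia.
  + exists (2 * m), (4 * m), (3 * m); split; first lia; split; first lia; split; first lia.
    by [].
Qed.

Lemma run6 w : run 6 w = 6.
Proof. by elim: w. Qed.

Definition gs q : nat := (q == 1) || (q == 3).

Lemma inv_run w : forall q, run q w != 6 ->
  count_mem 0 w + count_mem 1 w + gs q = count_mem 3 w + gs (run q w).
Proof.
elim: w => [|a w IH] q /=; first by rewrite addnC.
case: q => [|[|[|[|[|[|q]]]]]]; case: a => [|[|[|[|a]]]] /=;
  rewrite ?run6 // => H; have := IH _ H => /=;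
  rewrite ?[gs 0]/gs ?[gs 1]/gs ?[gs 2]/gs ?[gs 3]/gs ?[gs 4]/gs ?[gs 5]/gs /=;
  move: (gs _) => g; lia.
Qed.

Lemma acc_cnt w : run 0 w \in [:: 0; 2; 4] -> count_mem 0 w + count_mem 1 w = count_mem 3 w.
Proof.
move=> H; have H6 : run 0 w != 6 by move: H; rewrite !inE => /or3P [] /eqP ->.
have := inv_run H6; move: H; rewrite !inE => /or3P [] /eqP -> ; rewrite /gs /=; lia.
Qed.

Lemma run_cyc q s a : run q s = q -> run q (fl a s) = q.
Proof. move=> H; elim: a => [//|a IH]; by rewrite fl_S /run foldl_cat -/(run q s) H. Qed.

Lemma run_mex m : 0 < m -> run 0 (mexw m) = 4.
Proof.
move=> Hm; rewrite /mexw /run !foldl_cat -!/(run _ _).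
rewrite (@run_cyc 0) //.
have [k ->] : exists k, 4 * m = k.+1 by exists (4 * m).-1; lia.
have [j ->] : exists j, 3 * m = j.+1 by exists (3 * m).-1; lia.
rewrite !fl_S /run !foldl_cat -!/(run _ _).
have -> : run 0 [:: 1; 3] = 2 by [].
rewrite (@run_cyc 2) //.
have -> : run 2 [:: 2; 2] = 4 by [].
by rewrite (@run_cyc 4).
Qed.

Lemma all_mex m : all (fun a => a < 4) (mexw m).
Proof. by rewrite /mexw !all_cat !all_fl. Qed.

Lemma size_cnt s : all (fun a => a < 4) s ->
  size s = count_mem 0 s + count_mem 1 s + count_mem 2 s + count_mem 3 s.
Proof.
elim: s => [//|a s IH] /= /andP [Ha Hs]; rewrite IH //.
by case: a Ha => [|[|[|[|a]]]] //= _; lia.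
Qed.

Lemma arith M m2 n2 d0 d1 d2 d3 e0 e1 e2 e3 S :
  e0 = 2 * m2 -> e1 = 4 * m2 -> e2 = n2 -> e3 = n2 ->
  e0 = 2 * M + d0 -> e1 = 4 * M + d1 -> e2 = 2 * (3 * M) + d2 -> e3 = 2 * M + 4 * M + d3 ->
  e0 + e1 = e3 -> S = d0 + d1 + d2 + d3 -> 0 < S -> 0 < d0 /\ 0 < d2.
Proof. lia. Qed.

Lemma in_catl (a : nat) s1 s2 : a \in s1 -> a \in s1 ++ s2.
Proof. by rewrite mem_cat => ->. Qed.
Lemma in_catr (a : nat) s1 s2 : a \in s2 -> a \in s1 ++ s2.
Proof. by rewrite mem_cat orbC => ->. Qed.
Lemma in_cat (a : nat) s1 s2 : a \in s1 ++ s2 -> a \in s1 \/ a \in s2.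
Proof. by rewrite mem_cat => /orP. Qed.
Lemma in_drop (a : nat) n s : a \in drop n s -> a \in s.
Proof. exact: mem_drop. Qed.
Lemma in_take (a : nat) n s : a \in take n s -> a \in s.
Proof. exact: mem_take. Qed.
Lemma in_fl (a : nat) n s : a \in fl n s -> a \in s.
Proof. exact: mem_fl. Qed.

Lemma notCF : ~ context_free (bdir_lang Lex).
Proof.
move=> [G HG].
have HL w : cfg_language (G' G) w <-> bdir_lang Lex w /\ run 0 w \in [:: 0; 2; 4].
  by rewrite prod_lang HG.
have [p Hp] := pumping (G' G).
set M := p.+1.
set z := mexw M.
have HM : 0 < M by [].
have Hz : cfg_language (G' G) z.
  apply/HL; split; last by rewrite /z run_mex.
  by have [] := (part2 z).2 (ex_intro _ M (conj HM erefl)).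
have Hsz : p < size z by rewrite /z size_mexw /M; lia.
have [u [v [m' [x [y [Ez Hvx Hsmall Hz2]]]]]] := Hp z Hz Hsz.
move/HL: Hz2 => [[v' [[m2 [n2 [Hm2 [Hn2 Ev']]]] Ez2]] Hacc].
have C2 k : count_mem k (u ++ v ++ v ++ m' ++ x ++ x ++ y) = count_mem k (lexw m2 n2).
  by rewrite Ez2 cnt_bdir Ev'.
have C1 k : count_mem k (u ++ v ++ v ++ m' ++ x ++ x ++ y) = count_mem k z + count_mem k (v ++ x).
  by rewrite Ez !count_cat; lia.
have [A0 A1 A2 A3] := cnt_lex m2 n2.
have [B0 B1 B2 B3] := cnt_rex (2 * M) (4 * M) (3 * M).
have Eacc := acc_cnt Hacc.
have Hall : all (fun a => a < 4) (v ++ x).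
  have := all_mex M; rewrite -/z Ez !all_cat.
  by move=> /and5P [_ -> _ -> _].
have Hs := size_cnt Hall.
have := C1 0; have := C1 1; have := C1 2; have := C1 3.
have := C2 0; have := C2 1; have := C2 2; have := C2 3.
rewrite A0 A1 A2 A3.
have -> : z = rexw (2 * M) (4 * M) (3 * M) by [].
rewrite B0 B1 B2 B3 => F3 F2 F1 F0 G3 G2 G1 G0.
have [P0 P2] := arith F0 F1 F2 F3 G0 G1 G2 G3 Eacc Hs Hvx.
have M0 : 0 \in v ++ m' ++ x.
  move: P0; rewrite -has_count has_pred1 => /in_cat [H|H]; [exact: in_catl | by do 2 apply: in_catr].
have M2 : 2 \in v ++ m' ++ x.
  move: P2; rewrite -has_count has_pred1 => /in_cat [H|H]; [exact: in_catl | by do 2 apply: in_catr].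
have Ez' : z = u ++ (v ++ m' ++ x) ++ y by rewrite Ez !catA.
have Ez3 : z = fl (2 * M) [:: 0; 3] ++ fl (4 * M) [:: 1; 3] ++ fl (3 * M) [:: 2; 2] by [].
have H1 : size u < size (fl (2 * M) [:: 0; 3]).
  case: (ltnP (size u) (size (fl (2 * M) [:: 0; 3]))) => // H; exfalso.
  have : 0 \in drop (size u) z.
    rewrite Ez' drop_size_cat //.
    exact: in_catl.
  rewrite Ez3 drop_cat ltnNge H /= => /in_drop /in_cat.
  by case => /in_fl; rewrite !inE.
have H2 : size (fl (2 * M) [:: 0; 3]) + size (fl (4 * M) [:: 1; 3]) < size u + size (v ++ m' ++ x).
  case: ltnP => // H; exfalso.
  have : 2 \in take (size u + size (v ++ m' ++ x)) z.
    have -> : take (size u + size (v ++ m' ++ x)) z = u ++ (v ++ m' ++ x).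
      by rewrite Ez' (catA u (v ++ m' ++ x) y) take_size_cat //; exact: size_cat.
    exact: in_catr.
  have H' : size u + size (v ++ m' ++ x) <= size (fl (2 * M) [:: 0; 3] ++ fl (4 * M) [:: 1; 3]).
    by apply: leq_trans H _; rewrite size_cat.
  rewrite Ez3 (catA (fl (2 * M) [:: 0; 3])) (takel_cat _ H') => /in_take /in_cat.
  by case => /in_fl; rewrite !inE.
have HQ : size (fl (4 * M) [:: 1; 3]) = 8 * M by rewrite size_fl /=; lia.
move: H1 H2 HQ Hsmall; rewrite /M; lia.
Qed.

Theorem mainTheorem16 :
  context_free Lex /\
  (forall w, (bdir_lang Lex w /\ Rex w) <-> Mex w) /\
  ~ context_free (bdir_lang Lex) /\
  ~ (forall L : language nat, context_free L -> context_free (bdir_lang L)).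
Proof.
split; first exact: Lex_CF.
split; first exact: part2.
split; first exact: notCF.
move=> H; apply: notCF; apply: H; exact: Lex_CF.
Qed.
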